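(* If $X$ is an (infinite) $T_1$-space such that $nu_s(X)\le 2^{s(X)}$, then $|X|\le 2^{2^{s(X)}}$.
   Context: For a space $X$ and $A\subseteq X$, the $\theta$-closure of $A$ is $\mathrm{cl}_\theta(A):=\{y\in X:\ \overline{B}\cap A\neq\emptyset$ for every open neighborhood $B$ of $y\}$. The non-Urysohn number of $X$ with respect to singletons is $nu_s(X):=1+\sup\{|\mathrm{cl}_\theta(\{x\})|:x\in X\}$. $s(X)$ denotes the spread of $X$ (supremum of cardinalities of discrete subspaces, plus $\omega$). Throughout, ''space'' means infinite topological space. *)

(* Defs.v *)
From HB Require Import structures.
From mathcomp Require Import all_boot all_order.
From mathcomp Require Import all_classical all_reals topology.
Set Implicit Arguments. Unset Strict Implicit. Unset Printing Implicit Defensive.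
Local Open Scope classical_set_scope.
Local Open Scope card_scope.

Definition theta_closure (X : topologicalType) (A : set X) : set X :=
  [set y | forall B : set X, open B -> B y -> closure B `&` A !=set0].

Definition discrete_subspace (X : topologicalType) (D : set X) : Prop :=
  forall d, D d -> exists U : set X, open U /\ U `&` D = [set d].

(* |K| = s(X) = sup{|D| : D discrete} + omega, i.e. |K| is the least cardinal
   (w.r.t. injections) bounding all discrete subspaces and omega. *)
Definition is_spread (X : topologicalType) (K : Type) : Prop :=
  [/\ (forall D : set X, discrete_subspace D -> D #<= [set: K]),
      [set: nat] #<= [set: K] &
      (forall L : Type, (forall D : set X, discrete_subspace D -> D #<= [set: L]) ->
         [set: nat] #<= [set: L] -> [set: K] #<= [set: L])].

(* nu_s(X) <= |C|, where nu_s(X) = 1 + sup_x |cl_theta({x})|.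
   1 + |A| is realized as the cardinality of (Some @` A) plus one new point None. *)
Definition nu_s_le (X : topologicalType) (U : Type) (C : set U) : Prop :=
  forall x : X, (Some @` theta_closure [set x] `|` [set None]) #<= C.

(* Main.v *)
Require Import Defs.
From HB Require Import structures.
From mathcomp Require Import all_boot all_order.
From mathcomp Require Import all_classical all_reals topology.
From mathcomp Require Import wochoice.
Local Open Scope classical_set_scope.
Local Open Scope card_scope.
Definition injle {T U} (A : set T) (B : set U) := exists f : T -> U,
  (forall a, A a -> B (f a)) /\ (forall a b, A a -> A b -> f a = f b -> a = b).
Lemma card_le_injle {T U} {A : set T} {B : set U} (u0 : U) : A #<= B -> injle A B.
Proof.
case/card_leP => f.
pose g (a : T) : U := match pselect (A a) with left h => set_val (f (SigSub (mem_set h))) | right _ => u0 end.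
exists g; split.
  move=> a Aa; rewrite /g; case: pselect => // h. apply: set_valP.
move=> a b Aa Ab; rewrite /g; case: pselect => // h; case: pselect => // h'.
move/val_inj => /(@inj _ _ _ f) H.
have := H (in_setT _) (in_setT _).
by move/(congr1 val).
Qed.
Lemma bitdbl_inj {b b' : bool} {n m} : (b + n.*2 = b' + m.*2)%N -> b = b' /\ n = m.
Proof.
move=> H; split.
  by have := congr1 odd H; rewrite !oddD !odd_double !addbF !oddb.
by have := congr1 half H; rewrite !half_bit_double.
Qed.
Lemma zorn_dbl (K : Type) (e : nat -> K) : injective e ->
  exists2 A : set ((K * bool) * K),
  [/\ (forall p y y', A (p,y) -> A (p,y') -> y = y'),
  (forall p p' y, A (p,y) -> A (p',y) -> p = p'),
  (forall a b y, A ((a,b),y) -> exists q, A (q,a)) &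
  (forall p y b, A (p,y) -> exists z, A ((y,b),z))]
  & finite_set (~` [set y | exists p, A (p,y)]).
Proof.
move=> einj.
pose P (G : set ((K * bool) * K)) := [/\ (forall p y y', G (p,y) -> G (p,y') -> y = y'),
  (forall p p' y, G (p,y) -> G (p',y) -> p = p'),
  (forall a b y, G ((a,b),y) -> exists q, G (q,a)) &
  (forall p y b, G (p,y) -> exists z, G ((y,b),z))].
have [A [PA Amax]] : exists A, P A /\ forall B, A `<` B -> ~ P B.
  apply: Zorn_bigcup => F FP Ftot; split.
  - move=> p y y' [G1 FG1 G1y] [G2 FG2 G2y].
    case: (Ftot _ _ FG1 FG2) => sub.
    + by case: (FP _ FG2) => H _ _ _; apply: H (sub _ G1y) G2y.
    + by case: (FP _ FG1) => H _ _ _; apply: H G1y (sub _ G2y).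
  - move=> p p' y [G1 FG1 G1y] [G2 FG2 G2y].
    case: (Ftot _ _ FG1 FG2) => sub.
    + by case: (FP _ FG2) => _ H _ _; apply: H (sub _ G1y) G2y.
    + by case: (FP _ FG1) => _ H _ _; apply: H G1y (sub _ G2y).
  - move=> a b y [G FG Gy]; case: (FP _ FG) => _ _ H _.
    by have [q Gq] := H _ _ _ Gy; exists q; exists G.
  - move=> p y b [G FG Gy]; case: (FP _ FG) => _ _ _ H.
    by have [q Gq] := H _ _ b Gy; exists q; exists G.
exists A => //.
case: PA => Afun Ainj Adr Ard.
apply/finite_setPn => /(card_le_injle (e 0%N)) [f [fR finj]].
have fR' n : ~ (exists p, A (p, f n)) by have := fR n I.
have finj' n m : f n = f m -> n = m by apply: finj.
pose B := A `|` [set q | exists n (b:bool), q = ((f n, b), f (b + n.*2)%N)].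
apply: (Amax B).
  split; first by move=> q Aq; left.
  move=> /(_ ((f 0%N, false), f 0%N)) H.
  apply: (fR' 0%N); exists (f 0%N, false); apply: H; right; by exists 0%N, false.
split.
- move=> p y y' [Ay|[n [b E]]] [Ay'|[n' [b' E']]].
  + exact: Afun Ay Ay'.
  + move: E' => [Ep _]; rewrite Ep in Ay.
    by have [q Aq] := Adr _ _ _ Ay; case: (fR' n'); exists q.
  + case: E => Ep _; rewrite Ep in Ay'.
    by have [q Aq] := Adr _ _ _ Ay'; case: (fR' n); exists q.
  + case: E => ? ?; subst; case: E' => /finj' -> -> ->; done.
- move=> p p' y [Ay|[n [b E]]] [Ay'|[n' [b' E']]].
  + exact: Ainj Ay Ay'.
  + by move: E' => [_ Ey]; case: (fR' (b' + n'.*2)%N); exists p; rewrite -Ey.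
  + by case: E => _ Ey; case: (fR' (b + n.*2)%N); exists p'; rewrite -Ey.
  + case: E => ? ?; subst; case: E' => ? /finj' /bitdbl_inj [? ?]; subst; done.
- move=> a b y [Ay|[n [b0 E]]].
    by have [q Aq] := Adr _ _ _ Ay; exists q; left.
  move: E => [-> _ _].
  exists (f (n./2), odd n); right; exists n./2, (odd n); by rewrite odd_double_half.
- move=> p y b [Ay|[n [b0 E]]].
    by have [z Az] := Ard _ _ b Ay; exists z; left.
  move: E => [_ ->].
  by exists (f (b + (b0 + n.*2)%N.*2)%N); right; exists (b0 + n.*2)%N, b.
Qed.

Lemma injle_card_le {T U} {A : set T} {B : set U} : injle A B -> A #<= B.
Proof.
case=> f [fAB finj].
have [F] : $|{injfun A >-> B}|.
  apply/injfunPex; exists f => //; move=> a b /set_mem Aa /set_mem Ab; exact: finj.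
exact: inj_card_le.
Qed.

Lemma dbl_exists (K : Type) (e : nat -> K) : injective e ->
  exists d : K * bool -> K, injective d.
Proof.
move=> einj; have [A [Afun Ainj Adr Ard] finC] := @zorn_dbl _ _ einj.
pose Rg := [set y | exists p, A (p,y)].
have Rginf : ~ finite_set Rg.
  move=> finR; have : finite_set [set: K].
    by rewrite -(setUv Rg) finite_setU; split.
  move/finite_setPn; apply; apply: injle_card_le; exists e; split => // a b _ _; exact: einj.
have [r [rR rinj]] : injle [set: nat] Rg.
  by apply: (card_le_injle (e 0%N)); apply/infiniteP.
have {}rinj : injective r by move=> a b; apply: rinj.
have [h [_ hinj]] : injle (~` Rg) [set: nat].
  have [n /(card_le_injle 0%N) [h [_ hinj]]] := proj1 (finite_set_leP _) finC.
  by exists h.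
have /choice [gA gAP] : forall kb : K * bool, exists z, Rg kb.1 -> A (kb, z).
  move=> [k b]; case: (pselect (Rg k)) => [[p Ap]|nR]; last by exists (e 0%N).
  by have [z Az] := Ard _ _ b Ap; exists z.
pose sig (k : K) : K := match pselect (exists m, r m = k) with
  | left H => r (true + (sval (cid H)).*2)%N | right _ => k end.
have sig_inj : injective sig.
  move=> k k'; rewrite /sig; case: pselect => H; case: pselect => H'.
  - case: cid => m /= <-; case: cid => m' /= <-.
    by move/rinj => E; have [_ ->] := @bitdbl_inj true true m m' E.
  - by move=> E; case: H'; exists (true + (sval (cid H)).*2)%N.
  - by move=> E; case: H; exists (true + (sval (cid H')).*2)%N.
  - done.
have sig_even k j : sig k <> r (false + j.*2)%N.
  rewrite /sig; case: pselect => H.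
    by move/rinj => E; have [] := @bitdbl_inj true false _ j E.
  by move=> E; apply: H; exists (false + j.*2)%N.
exists (fun kb => if pselect (Rg kb.1) then sig (gA kb) else r (false + (kb.2 + (h kb.1).*2).*2)%N).
move=> [k b] [k' b'] /=; case: pselect => H; case: pselect => H'.
- move/sig_inj => E.
  have A1 := gAP (k,b) H; have A2 := gAP (k',b') H'.
  by rewrite E in A1; apply: Ainj A1 A2.
- by move/sig_even.
- by move/esym/sig_even.
- move/rinj => E; have [_ E2] := @bitdbl_inj false false _ _ E.
  have [-> /(hinj _ _ H H') E3] := bitdbl_inj E2.
  by rewrite E3.
Qed.

Section Shap.
Variable X : topologicalType.

Lemma discr_in {V D : set X} {d z} : V `&` D = [set d] -> V z -> D z -> [set d] z.
Proof. by move=> E Vz Dz; have : (V `&` D) z by []; rewrite E. Qed.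
Lemma discr_mem {V D : set X} {d} : V `&` D = [set d] -> V d /\ D d.
Proof. by move=> E; have : (V `&` D) d by rewrite E. Qed.

Lemma shapiro (Y : set X) (U : X -> set X) :
  (forall y, Y y -> open (U y) /\ U y y) ->
  exists D, [/\ D `<=` Y, discrete_subspace D &
    Y `<=` closure D `|` \bigcup_(d in D) U d].
Proof.
move=> HU.
pose Rel (D D' : set X) := D `<=` D' /\ forall y, D' y -> ~ D y -> ~ closure D y /\ forall d, D d -> ~ U d y.
pose T := {D : set X | D `<=` Y /\ discrete_subspace D}.
pose R (s t : T) := `[< Rel (sval s) (sval t) >].
have [t tmax] : exists t, forall s, R t s -> s = t.
  apply: (@Zorn T R).
  - by move=> s; apply/asboolP; split => // y ? ?.
  - move=> r s t /asboolP [rs rsP] /asboolP [st stP]; apply/asboolP; split.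
      by move=> z /rs /st.
    move=> y ty nry; have [sy|nsy] := pselect (sval s y).
      have [H1 H2] := rsP y sy nry; split => //.
    have [H1 H2] := stP y ty nsy; split.
      by move=> cy; apply: H1; apply: closure_subset cy.
    by move=> d rd; apply: H2; apply: rs.
  - move=> [s sP] [t tP] /asboolP [st _] /asboolP [ts _]; apply: eq_exist.
    by apply/seteqP; split.
  - move=> A Atot.
    pose W := \bigcup_(s in A) sval s.
    have Wchain : forall s, A s -> Rel (sval s) W.
      move=> s As; split; first by move=> z sz; exists s.
      move=> y [s' As' s'y] nsy.
      have [/asboolP [ss' ss'P]|/asboolP [s's _]] := Atot _ _ As As'.
        exact: ss'P.
      by case: nsy; apply: s's.
    have WP : W `<=` Y /\ discrete_subspace W.
      split; first by move=> z [s _ sz]; case: (svalP s) => /(_ z sz).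
      move=> d [s0 As0 s0d].
      have [_ /(_ d s0d) [V [oV VE]]] := svalP s0.
      have [Yd _] : Y d /\ True by split => //; case: (svalP s0) => /(_ d s0d).
      exists (V `&` U d); split; first by apply: openI => //; case: (HU d Yd).
      apply/seteqP; split.
        move=> z [[Vz Udz] [s1 As1 s1z]].
        have [/asboolP [s01 s01P]|/asboolP [s10 _]] := Atot _ _ As0 As1.
          have [s0z|ns0z] := pselect (sval s0 z).
            exact: (discr_in VE Vz s0z).
          by have [_ /(_ d s0d)] := s01P z s1z ns0z.
        by apply: (discr_in VE Vz); apply: s10.
      move=> z -> /=; split; last by exists s0.
      by split; [case: (discr_mem VE) | case: (HU d Yd)].
    exists (exist _ W WP) => s As; apply/asboolP; exact: Wchain.
case: t tmax => D [DY Ddisc] tmax.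
exists D; split => // y Yy.
apply: contrapT => /not_orP [ncl nst].
have nU : forall d, D d -> ~ U d y by move=> d Dd Udy; apply: nst; exists d.
have D'P : (D `|` [set y]) `<=` Y /\ discrete_subspace (D `|` [set y]).
  split; first by move=> z [/DY|->].
  move=> z [Dz|->].
  - have [V [oV VE]] := Ddisc z Dz.
    exists (V `&` U z); split; first by apply: openI => //; case: (HU z (DY z Dz)).
    apply/seteqP; split.
      move=> w [[Vw Uzw] [Dw|wy]]; first exact: (discr_in VE Vw Dw).
      by rewrite wy in Uzw; case: (nU z Dz Uzw).
    move=> w -> /=; split; last by left.
    by split; [case: (discr_mem VE) | case: (HU z (DY z Dz))].
  - exists (~` closure D); split; first by rewrite openC; apply: closed_closure.
    apply/seteqP; split.
      by move=> w [ncw [Dw|->]] //; case: ncw; apply: subset_closure.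
    by move=> w -> /=; split => //; right.
have := tmax (exist _ _ D'P).
have HR : R (exist _ D (conj DY Ddisc)) (exist _ _ D'P).
  apply/asboolP; split; first by move=> z Dz; left.
  by move=> w [Dw|->] // _; split => // d Dd; apply: nU.
move=> /(_ HR) /(congr1 sval) /= E.
have : (D `|` [set y]) y by right.
rewrite E => Dy; apply: nst; exists y => //; by case: (HU y Yy).
Qed.
End Shap.



Section Pseudo.
Variables (X : topologicalType) (K : Type).
Variable pr : set K -> set K -> set K.
Hypothesis pr_inj : forall S T S' T', pr S T = pr S' T' -> S = S' /\ T = T'.
Variables k0 k1 : K.
Hypothesis k01 : k0 <> k1.
Hypothesis T1 : accessible_space X.
Hypothesis spreadK : forall D : set X, discrete_subspace D -> injle D [set: K].
Hypothesis nuK : forall x : X, injle (theta_closure [set x]) [set: set K].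

Lemma closureI_open (D B : set X) y : open B -> B y -> closure D y -> closure (D `&` B) y.
Proof.
move=> oB By cDy N Ny.
have NB : nbhs y (N `&` B) by apply: filterI => //; apply: open_nbhs_nbhs.
have [z [Dz [Nz Bz]]] := cDy _ NB.
by exists z.
Qed.

Lemma set1_neq0 {k : K} : [set k] <> set0.
Proof. by move=> E; have : [set k] k by []; rewrite E. Qed.

Lemma set1_inj {k k' : K} : [set k] = [set k'] -> k = k'.
Proof. by move=> E; have : [set k] k by []; rewrite E. Qed.

Lemma pseudobase (x : X) : exists V : set K -> set X,
  (forall i, open (V i) /\ V i x) /\ (forall y, y <> x -> exists i, ~ V i y).
Proof.
pose th := theta_closure [set x].
have /choice [U HU] : forall y, exists B, ~ th y -> [/\ open B, B y & ~ closure B x].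
  move=> y; case: (pselect (th y)) => thy; first by exists setT.
  move/existsNP: thy => [B /not_implyP [oB /not_implyP [By H]]].
  exists B => _; split => // cBx; apply: H; exists x; split => //.
have [D [DY Ddisc Dcov]] := @shapiro X (~` th) U
  (fun y Yy => let: And3 o b _ := HU y Yy in conj o b).
have [e [_ einj]] := spreadK _ Ddisc.
have [j [_ jinj]] := nuK x.
pose Fam (F : set X) := [\/ exists2 d, D d & F = ~` closure (U d),
   exists E, [/\ E `<=` D, ~ closure E x & F = ~` closure E] |
   exists w, [/\ th w, w <> x & F = ~` [set w]]].
pose c (F : set X) : set K :=
  match pselect (exists2 d, D d & F = ~` closure (U d)) with
  | left H => pr [set e (s2val (cid2 H))] set0
  | right _ => match pselect (exists E, [/\ E `<=` D, ~ closure E x & F = ~` closure E]) with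
    | left H => pr (e @` sval (cid H)) [set k0]
    | right _ => match pselect (exists w, [/\ th w, w <> x & F = ~` [set w]]) with
      | left H => pr (j (sval (cid H))) [set k1]
      | right _ => set0 end end end.
have cspec F : Fam F ->
   [\/ exists d, [/\ D d, F = ~` closure (U d) & c F = pr [set e d] set0],
    exists E, [/\ E `<=` D, F = ~` closure E & c F = pr (e @` E) [set k0]] |
    exists w, [/\ th w, F = ~` [set w] & c F = pr (j w) [set k1]]].
  move=> FF; rewrite /c; case: pselect => H1.
    by apply: Or31; case: cid2 => d Dd FE /=; exists d.
  case: pselect => H2.
    by apply: Or32; case: cid => E /= [ED _ FE]; exists E.
  case: pselect => H3.
    by apply: Or33; case: cid => w /= [thw _ FE]; exists w.
  by case: FF.
have cinj : forall F F', Fam F -> Fam F' -> c F = c F' -> F = F'.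
  move=> F F' /cspec FF /cspec FF'.
  case: FF => [[d [Dd -> ->]]|[E [ED -> ->]]|[w [thw -> ->]]];
  case: FF' => [[d' [Dd' -> ->]]|[E' [ED' -> ->]]|[w' [thw' -> ->]]] /pr_inj [H1 H2];
  try (by case: (set1_neq0 H2)); try (by case: (set1_neq0 (esym H2)));
  try (by case: k01; apply: set1_inj).
  - by rewrite (einj _ _ Dd Dd' (set1_inj H1)).
  - congr (~` closure _); apply/seteqP; split => z Ez.
      have : (e @` E') (e z) by rewrite -H1; exists z.
      by case=> z' E'z' /(einj _ _ (ED' _ E'z') (ED _ Ez)) <-.
    have : (e @` E) (e z) by rewrite H1; exists z.
    by case=> z' Ez' /(einj _ _ (ED _ Ez') (ED' _ Ez)) <-.
  - by rewrite (jinj _ _ thw thw' H1).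
have FamP : forall F, Fam F -> open F /\ F x.
  move=> F [[d Dd ->]|[E [_ nEx ->]]|[w [_ wx ->]]].
  - split; first by rewrite openC; exact: closed_closure.
    by case: (HU d (DY d Dd)).
  - by split => //; rewrite openC; exact: closed_closure.
  - split; first by rewrite openC; exact: accessible_closed_set1.
    by move=> xw; apply: wx.
pose V (i : set K) : set X := match pselect (exists2 F, Fam F & c F = i) with
  | left H => s2val (cid2 H) | right _ => setT end.
exists V; split.
  move=> i; rewrite /V; case: pselect => [H|_]; last by split => //; exact: openT.
  by case: cid2 => F /= FF _; apply: FamP.
move=> y yx.
suff [F FF nFy] : exists2 F, Fam F & ~ F y.
  exists (c F); rewrite /V; case: pselect => [H|]; last by case; exists F.
  by case: cid2 => F' /= FF' /(cinj _ _ FF' FF) ->.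
case: (pselect (th y)) => thy.
  exists (~` [set y]); last by move/(_ erefl).
  by apply: Or33; exists y.
case: (Dcov y thy) => [cDy|[d Dd Udy]].
  have [oUy Uyy nUx] := HU y thy.
  exists (~` closure (D `&` U y)); last by apply; apply: closureI_open.
  apply: Or32; exists (D `&` U y); split => //.
  by move=> cx; apply: nUx; apply: closure_subset cx => z [].
exists (~` closure (U d)); last by apply; apply: subset_closure.
by apply: Or31; exists d.
Qed.
End Pseudo.



Section WO.
Variables (X : eqType) (R : rel X).
Hypothesis Rwo : well_order R.

Lemma wo_min (P : X -> Prop) : (exists x, P x) -> exists m, P m /\ forall y, P y -> R m y.
Proof.
move=> [x Px].
have [m [[mA mlb] _]] := Rwo [pred z | `[< P z >]] (ex_intro _ x (asboolT Px)).
exists m; split; first by move: mA; rewrite inE.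
by move=> y Py; apply: mlb; rewrite inE.
Qed.

Lemma R_refl x : R x x.
Proof. by have [m [mx H]] := @wo_min (fun z => z = x) (ex_intro _ x erefl); subst; apply: H. Qed.

Lemma R_total x y : R x y \/ R y x.
Proof.
have [m [[->|->] H]] := @wo_min (fun z => z = x \/ z = y) (ex_intro _ x (or_introl erefl)).
  by left; apply: H; right.
by right; apply: H; left.
Qed.

Lemma R_anti {x y} : R x y -> R y x -> x = y.
Proof.
move=> xy yx.
have [m [[mA mlb] muniq]] := Rwo [pred z | (z == x) || (z == y)] (ex_intro _ x (introT orP (or_introl (eqxx x)))).
have hx : m = x.
  apply: muniq; split; first by rewrite inE eqxx.
  by move=> z; rewrite inE => /orP [/eqP ->|/eqP ->] //; apply: R_refl.
have hy : m = y.
  apply: muniq; split; first by rewrite inE eqxx orbT.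
  by move=> z; rewrite inE => /orP [/eqP ->|/eqP ->] //; apply: R_refl.
by rewrite -hx -hy.
Qed.

Lemma R_trans x y z : R x y -> R y z -> R x z.
Proof.
move=> xy yz.
have [m [[->|[->|->]] H]] := @wo_min (fun w => w = x \/ w = y \/ w = z) (ex_intro _ x (or_introl erefl)).
- by apply: H; right; right.
- have yx : R y x by apply: H; left.
  by rewrite (R_anti xy yx).
- have zy : R z y by apply: H; right; left.
  by rewrite (R_anti yz zy) in xy.
Qed.

Definition ltw x y := R x y /\ x <> y.

Lemma ltw_trans {x y z} : ltw x y -> ltw y z -> ltw x z.
Proof.
move=> [xy nxy] [yz nyz]; split; first exact: R_trans xy yz.
by move=> exz; subst z; apply: nxy; apply: R_anti.
Qed.

Lemma ltw_irr {x} : ~ ltw x x.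
Proof. by case. Qed.

Lemma ltw_total x y : [\/ ltw x y, x = y | ltw y x].
Proof.
case: (pselect (x = y)) => [->|nxy]; first by apply: Or32.
by case: (R_total x y) => H; [apply: Or31 | apply: Or33]; split => // E; apply: nxy.
Qed.

Lemma ltw_asym x y : ltw x y -> ~ ltw y x.
Proof. by move=> [xy nxy] [yx _]; apply: nxy; apply: R_anti. Qed.

Lemma ltw_ind (P : X -> Prop) : (forall x, (forall y, ltw y x -> P y) -> P x) -> forall x, P x.
Proof.
move=> IH x; apply: contrapT => nPx.
have [m [nPm mmin]] := @wo_min (fun z => ~ P z) (ex_intro _ x nPx).
apply: nPm; apply: IH => y [ym nym]; apply: contrapT => nPy.
by apply: nym; apply: R_anti => //; apply: mmin.
Qed.

Lemma ltw_wf : well_founded ltw.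
Proof. by apply: ltw_ind => x IH; constructor. Qed.


Variables (Col : Type) (col : X -> X -> Col).

Definition CmF (x : X) : forall y, (forall z, ltw z y -> Prop) -> Prop :=
  fun y rec => ltw y x /\ forall z (h : ltw z y), rec z h -> col z y = col z x.

Definition Cm (x : X) : X -> Prop := Fix ltw_wf (fun _ => Prop) (CmF x).

Lemma Cm_eq x y : Cm x y <-> ltw y x /\ (forall z, ltw z y -> Cm x z -> col z y = col z x).
Proof.
rewrite /Cm Fix_eq; first by [].
move=> w f g Hfg; rewrite /CmF.
have -> : f = g; last by [].
apply: functional_extensionality_dep => v; apply: functional_extensionality_dep => h.
exact: Hfg.
Qed.

Lemma Cm_lt {x y} : Cm x y -> ltw y x.
Proof. by case/Cm_eq. Qed.

Lemma Cm_col {x y z} : Cm x y -> ltw z y -> Cm x z -> col z y = col z x.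
Proof. by case/Cm_eq => _; apply. Qed.

Lemma Cm_sub {x y} : Cm x y -> forall z, ltw z y -> (Cm y z <-> Cm x z).
Proof.
move=> Cxy; apply: (@ltw_ind (fun z => ltw z y -> (Cm y z <-> Cm x z))) => z IH zy.
have yx := Cm_lt Cxy.
rewrite !Cm_eq; split.
  move=> [_ H]; split; first exact: ltw_trans zy yx.
  move=> w wz Cxw.
  have wy := ltw_trans wz zy.
  rewrite (H w wz); last by rewrite (IH w wz wy).
  exact: Cm_col Cxy wy Cxw.
move=> [_ H]; split => // w wz Cyw.
have wy := ltw_trans wz zy.
have Cxw : Cm x w by rewrite -(IH w wz wy).
rewrite (H w wz Cxw).
by rewrite (Cm_col Cxy wy Cxw).
Qed.

Lemma key_inj x y : (forall z, Cm x z <-> Cm y z) ->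
  (forall z, Cm x z -> col z x = col z y) -> x = y.
Proof.
move=> Hs Hc; case: (ltw_total x y) => // H.
- have Cyx : Cm y x.
    apply/Cm_eq; split => // z zx Cyz.
    by apply: Hc; rewrite Hs.
  by have := Cm_lt (proj2 (Hs x) Cyx); move/ltw_irr.
- have Cxy : Cm x y.
    apply/Cm_eq; split => // z zy Cxz.
    by rewrite (Hc z Cxz).
  by have := Cm_lt (proj1 (Hs y) Cxy); move/ltw_irr.
Qed.

Lemma iso_eq x y (phi : X -> X) :
  (forall a, Cm x a -> Cm y (phi a)) ->
  (forall b, Cm y b -> exists a, Cm x a /\ phi a = b) ->
  (forall a a', Cm x a -> Cm x a' -> (ltw a a' <-> ltw (phi a) (phi a'))) ->
  (forall a, Cm x a -> col a x = col (phi a) y) -> x = y.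
Proof.
move=> phiC phiS phiO phiK.
have fix_phi : forall w, Cm x w -> phi w = w.
  apply: (@ltw_ind (fun w => Cm x w -> phi w = w)) => w IH Cxw.
  have Cyw := phiC w Cxw.
  have wx := Cm_lt Cxw.
  have pwy := Cm_lt Cyw.
  symmetry; apply: key_inj.
  - move=> z; split.
      move=> Cwz; have zw := Cm_lt Cwz.
      have Cxz : Cm x z by rewrite -(Cm_sub Cxw _ zw).
      have pz := IH z zw Cxz.
      have zpw : ltw z (phi w) by rewrite -{1}pz; exact: (proj1 (phiO z w Cxz Cxw) zw).
      rewrite (Cm_sub Cyw _ zpw) -pz; exact: phiC.
    move=> Cpwz; have zpw := Cm_lt Cpwz.
    have Cyz : Cm y z by rewrite -(Cm_sub Cyw _ zpw).
    have [a [Cxa E]] := phiS z Cyz; subst z.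
    have aw : ltw a w by exact: (proj2 (phiO a w Cxa Cxw) zpw).
    rewrite (IH a aw Cxa) (Cm_sub Cxw _ aw) //.
  - move=> z Cwz; have zw := Cm_lt Cwz.
    have Cxz : Cm x z by rewrite -(Cm_sub Cxw _ zw).
    have pz := IH z zw Cxz.
    have zpw : ltw z (phi w) by rewrite -{1}pz; exact: (proj1 (phiO z w Cxz Cxw) zw).
    have Cyz : Cm y z by rewrite -pz; exact: phiC.
    rewrite (Cm_col Cxw zw Cxz) (Cm_col Cyw zpw Cyz) phiK // pz //.
apply: key_inj.
  move=> z; split.
    by move=> Cxz; rewrite -(fix_phi z Cxz); apply: phiC.
  by move=> Cyz; have [a [Cxa <-]] := phiS z Cyz; rewrite fix_phi.
by move=> z Cxz; rewrite phiK // fix_phi.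
Qed.

Lemma Cm_hom x a b : Cm x a -> Cm x b -> ltw a b -> col a b = col a x.
Proof. by move=> Ca Cb ab; apply: Cm_col. Qed.

End WO.



Arguments Cm_hom {X R Rwo Col col x a b}.
Arguments ltw_total {X R} Rwo x y.

Section Final.
Variables (X : topologicalType) (K : Type) (R : rel X).
Hypothesis Rwo : well_order R.
Hypothesis spreadK : forall D : set X, discrete_subspace D -> injle D [set: K].
Variable V : X -> set K -> set X.
Hypothesis HV : forall x i, open (V x i) /\ V x i x.
Hypothesis Hsep : forall x y, y <> x -> exists i, ~ V x i y.

Definition iota (x y : X) : set K := match pselect (exists i, ~ V x i y) with
  | left H => sval (cid H) | right _ => set0 end.

Lemma iota_spec {x y} : y <> x -> ~ V x (iota x y) y.
Proof.
move=> yx; rewrite /iota; case: pselect => [H|]; first by case: cid.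
by case; apply: Hsep.
Qed.

Definition colf (z y : X) : set K * set K := (iota z y, iota y z).

Local Notation C := (Cm X R Rwo _ colf).
Local Notation lt := (ltw X R).

Lemma class_discrete x c : discrete_subspace [set a | C x a /\ colf a x = c].
Proof.
move=> h [Ch hc]; exists (V h c.1 `&` V h c.2); split.
  by apply: openI; [case: (HV h c.1) | case: (HV h c.2)].
apply/seteqP; split; last first.
  move=> z -> /=; split => //; split; [case: (HV h c.1) | case: (HV h c.2)] => //.
move=> z [[V1 V2] [Cz zc]] /=.
case: (ltw_total Rwo h z) => // H.
- have E : colf h z = c by rewrite (Cm_hom Ch Cz H).
  have zh : z <> h by move=> E'; subst z; case: H.
  by case: (iota_spec zh); rewrite -E in V1 V2.
- have E : colf z h = c by rewrite (Cm_hom Cz Ch H).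
  have zh : z <> h by move=> E'; subst z; case: H.
  by case: (iota_spec zh); rewrite -E in V1 V2.
Qed.

Definition Sig := ((set K * set K) * K)%type.
Definition Code := (set Sig * set (Sig * Sig) * set (Sig * (set K * set K)))%type.

Lemma Cm_small x : exists f : X -> Sig, forall a b, C x a -> C x b -> f a = f b -> a = b.
Proof.
have /choice [E HE] : forall c, exists e : X -> K, forall a b,
    [set a | C x a /\ colf a x = c] a -> [set a | C x a /\ colf a x = c] b -> e a = e b -> a = b.
  by move=> c; have [e [_ einj]] := spreadK _ (class_discrete x c); exists e.
exists (fun a => (colf a x, E (colf a x) a)) => a b Ca Cb H.
have Ec : colf a x = colf b x := congr1 fst H.
have Ee := congr1 snd H; simpl in Ee; rewrite -Ec in Ee.
by apply: (HE _ a b) => //; split.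
Qed.

Lemma X_code : exists g : X -> Code, injective g.
Proof.
have /choice [F HF] := Cm_small.
pose S1 x : set Sig := [set s | exists a, C x a /\ F x a = s].
pose S2 x : set (Sig * Sig) := [set p | exists a b, [/\ C x a, C x b, lt a b & p = (F x a, F x b)]].
pose S3 x : set (Sig * (set K * set K)) := [set q | exists a, C x a /\ q = (F x a, colf a x)].
exists (fun x => (S1 x, S2 x, S3 x)) => x y [E1 E2 E3].
have hphi : forall a, C x a -> exists b, C y b /\ F y b = F x a.
  move=> a Ca; have : S1 x (F x a) by exists a.
  by rewrite E1.
pose phi a := match pselect (exists b, C y b /\ F y b = F x a) with
  | left H => sval (cid H) | right _ => a end.
have phiP : forall a, C x a -> C y (phi a) /\ F y (phi a) = F x a.
  move=> a Ca; rewrite /phi; case: pselect => [H|]; first by case: cid.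
  by case; apply: hphi.
apply: (@iso_eq X R Rwo _ colf x y phi).
- by move=> a /phiP [].
- move=> b Cb; have : S1 y (F y b) by exists b.
  rewrite -E1 => -[a [Ca Eab]]; exists a; split => //.
  have [Cpa Epa] := phiP a Ca.
  by apply: (HF y) => //; rewrite Epa.
- move=> a a' Ca Ca'; have [Cpa Epa] := phiP a Ca; have [Cpa' Epa'] := phiP a' Ca'.
  split => H.
    have : S2 x (F x a, F x a') by exists a, a'.
    rewrite E2 => -[b [b' [Cb Cb' bb' [Eb Eb']]]].
    have -> : phi a = b by apply: (HF y) => //; rewrite Epa.
    by have -> : phi a' = b' by apply: (HF y) => //; rewrite Epa'.
  have : S2 y (F y (phi a), F y (phi a')) by exists (phi a), (phi a').
  rewrite -E2 => -[c [c' [Cc Cc' cc' [Ec Ec']]]].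
  have -> : a = c by apply: (HF x) => //; rewrite -Ec Epa.
  by have -> : a' = c' by apply: (HF x) => //; rewrite -Ec' Epa'.
- move=> a Ca; have [Cpa Epa] := phiP a Ca.
  have : S3 x (F x a, colf a x) by exists a.
  rewrite E3 => -[b [Cb [Eb Ec]]].
  have -> : phi a = b by apply: (HF y) => //; rewrite Epa.
  by move=> Ec2; rewrite /colf Ec Ec2.
Qed.

End Final.



Theorem corollary3p13 (X : topologicalType) (K : Type) :
  infinite_set [set: X] ->
  accessible_space X ->
  is_spread X K ->
  nu_s_le X [set: set K] ->
  [set: X] #<= [set: set (set K)].
Proof.
move=> _ T1 [spD natK _] nu.
have [k _] : exists k : K, True.
  apply: contrapT => nK.
  have H0 : [set: K] = set0 by apply/seteqP; split => // z _; apply: nK; exists z.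
  rewrite H0 in natK; move/card_le0P: natK => E.
  by have : [set: nat] 0%N by []; rewrite E.
have [e [_ einj]] := card_le_injle k natK.
have {}einj : injective e by move=> a b; apply: einj.
have [d dinj] := @dbl_exists _ _ einj.
pose pr (S T : set K) : set K :=
  [set y | exists z, (S z /\ y = d (z, false)) \/ (T z /\ y = d (z, true))].
have prP S T z b : pr S T (d (z, b)) <-> (if b then T z else S z).
  split.
    by move=> [z' [[Sz' /dinj [? ?]]|[Tz' /dinj [? ?]]]]; subst.
  by case: b => H; exists z; [right|left].
have pr_inj S T S' T' : pr S T = pr S' T' -> S = S' /\ T = T'.
  move=> E; split; apply/seteqP; split => z H.
  - by have := proj2 (prP S T z false) H; rewrite E => /prP.
  - by have := proj2 (prP S' T' z false) H; rewrite -E => /prP.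
  - by have := proj2 (prP S T z true) H; rewrite E => /prP.
  - by have := proj2 (prP S' T' z true) H; rewrite -E => /prP.
pose k0 := e 0%N; pose k1 := e 1%N.
have k01 : k0 <> k1 by move/einj.
have spreadK : forall D : set X, discrete_subspace D -> injle D [set: K].
  by move=> D /spD /(card_le_injle k) H.
have nuK : forall x : X, injle (theta_closure [set x]) [set: set K].
  move=> x; have [f [_ finj]] := card_le_injle set0 (nu x).
  exists (fun z => f (Some z)); split => // a b Ha Hb /finj.
  by move=> /(_ (or_introl (imageP _ Ha)) (or_introl (imageP _ Hb))) [].
have /choice [V HV] := @pseudobase X K pr pr_inj k0 k1 k01 T1 spreadK nuK.
have HV1 x i : open (V x i) /\ V x i x by case: (HV x) => H _; apply: H.
have HV2 x y : y <> x -> exists i, ~ V x i y by case: (HV x) => _ H; apply: H.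
case: (well_ordering_principle X) => R Rwo.
have [g ginj] := @X_code X K R Rwo spreadK V HV1 HV2.
have set1_inj (a b : K) : [set a] = [set b] -> a = b.
  by move=> E; have : [set a] a by []; rewrite E.
have t01 : [set k0] <> [set k1] by move/set1_inj.
have t0 : set0 <> [set k0] by move=> E; have : [set k0] k0 by []; rewrite -E.
have t1 : set0 <> [set k1] by move=> E; have : [set k1] k1 by []; rewrite -E.
pose fcol (c : set K * set K) := pr c.1 c.2.
have fcol_inj : injective fcol by move=> [a b] [a' b'] /pr_inj /= [-> ->].
pose fsig (s : Sig K) := pr (fcol s.1) [set s.2].
have fsig_inj : injective fsig.
  by move=> [c z] [c' z'] /pr_inj [/fcol_inj H1 /set1_inj H2]; simpl in *; congruence.
pose fss (p : Sig K * Sig K) := pr (fsig p.1) (fsig p.2).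
have fss_inj : injective fss by move=> [a b] [a' b'] /pr_inj [/fsig_inj H1 /fsig_inj H2]; simpl in *; congruence.
pose f3 (q : Sig K * (set K * set K)) := pr (fsig q.1) (fcol q.2).
have f3_inj : injective f3 by move=> [a b] [a' b'] /pr_inj [/fsig_inj H1 /fcol_inj H2]; simpl in *; congruence.
pose enc (cd : Code K) : set (set K) := [set z | [\/ exists2 s, cd.1.1 s & z = pr (fsig s) set0,
   exists2 p, cd.1.2 p & z = pr (fss p) [set k0] | exists2 q, cd.2 q & z = pr (f3 q) [set k1]]].
have enc1 cd s : enc cd (pr (fsig s) set0) -> cd.1.1 s.
  case => [[s' H /pr_inj [/fsig_inj -> _]] //| [p _ /pr_inj [_ E]] | [q _ /pr_inj [_ E]]].
  - by case: t0.
  - by case: t1.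
have enc2 cd p : enc cd (pr (fss p) [set k0]) -> cd.1.2 p.
  case => [[s' _ /pr_inj [_ E]] | [p' H /pr_inj [/fss_inj -> _]] //| [q _ /pr_inj [_ E]]].
  - by case: t0.
  - by case: t01.
have enc3 cd q : enc cd (pr (f3 q) [set k1]) -> cd.2 q.
  case => [[s' _ /pr_inj [_ E]] | [p' _ /pr_inj [_ E]] | [q' H /pr_inj [/f3_inj -> _]] //].
  - by case: t1.
  - by case: t01.
have enc_inj : injective enc.
  move=> [[A1 A2] A3] [[B1 B2] B3] E.
  have -> : A1 = B1.
    apply/seteqP; split => z H.
      by apply: (enc1 (B1, B2, B3)); rewrite -E; apply: Or31; exists z.
    by apply: (enc1 (A1, A2, A3)); rewrite E; apply: Or31; exists z.
  have -> : A2 = B2.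
    apply/seteqP; split => z H.
      by apply: (enc2 (B1, B2, B3)); rewrite -E; apply: Or32; exists z.
    by apply: (enc2 (A1, A2, A3)); rewrite E; apply: Or32; exists z.
  have -> : A3 = B3.
    apply/seteqP; split => z H.
      by apply: (enc3 (B1, B2, B3)); rewrite -E; apply: Or33; exists z.
    by apply: (enc3 (A1, A2, A3)); rewrite E; apply: Or33; exists z.
  by [].
by apply: injle_card_le; exists (fun x => enc (g x)); split => // a b _ _ /enc_inj /ginj.
Qed.
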